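(* Under the assumptions of the previous identification result (binary $D,M(d),Y(d,m)$; $M=M(D)$, $Y=Y(D,M)$, $Y(d)=Y(d,M(d))$; $Y(d,0)=0$ a.s.; $D$ independent of $(M(d),Y(d,1))$ given $X=x$ for $d=0,1$; $P(D=d\mid X=x)>0$ and $P(M=1\mid D=d,X=x)>0$ for $d=0,1$), and assuming moreover $\mathbb{E}[Y\mid D=0,M=1,X=x]>0$, the causal risk ratio $$\mathrm{CRR}(x)=\frac{\mathbb{E}[Y(1)\mid X=x]}{\mathbb{E}[Y(0)\mid X=x]}$$ satisfies $$\mathrm{CRR}(x)=\frac{\mathbb{E}[Y\mid D=1,M=1,X=x]}{\mathbb{E}[Y\mid D=0,M=1,X=x]}\cdot\left\{\frac{P(D=1\mid M=1,X=x)}{P(D=0\mid M=1,X=x)}\right\}\Big/\left\{\frac{P(D=1\mid X=x)}{P(D=0\mid X=x)}\right\}.$$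
   Context: Each unit is a police–civilian encounter; $D$ is race ($1$ = minority), $M$ detainment, $Y$ police use of force, $X$ covariates. The first factor is called the naive risk ratio (computable from administrative records containing only $M=1$ encounters) and the second factor the bias factor. *)

(* Defs.v *)
From HB Require Import structures.
From mathcomp Require Import all_boot all_order all_algebra.
From mathcomp Require Import all_classical all_reals all_analysis.
Set Implicit Arguments. Unset Strict Implicit. Unset Printing Implicit Defensive.
Import Order.TTheory GRing.Theory Num.Theory.
Local Open Scope classical_set_scope.
Local Open Scope ring_scope.

Section Defs.
Context (d : measure_display) (T : measurableType d) (R : realType)
        (P : probability T R).

Definition prob (A : set T) : R := fine (P A).

Definition condP (A B : set T) : R := prob (A `&` B) / prob B.

(* conditional expectation of a {0,1}-valued variable Z given event B:
   E[Z | B] = P(Z = 1 | B) *)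
Definition condE (Z : T -> bool) (B : set T) : R := condP [set w | Z w] B.

Definition cond_indep_pair (A U V : T -> bool) (C : set T) : Prop :=
  forall a u v : bool,
    prob ([set w | A w = a] `&` [set w | U w = u] `&` [set w | V w = v] `&` C)
      * prob C
    = prob ([set w | A w = a] `&` C)
      * prob ([set w | U w = u] `&` [set w | V w = v] `&` C).
End Defs.

(* Main.v *)
Require Import Defs.
From HB Require Import structures.
From mathcomp Require Import all_boot all_order all_algebra.
From mathcomp Require Import all_classical all_reals all_analysis.
From mathcomp Require Import ring lra.
Import Order.TTheory GRing.Theory Num.Theory.
Local Open Scope classical_set_scope.
Local Open Scope ring_scope.

Section H.
Context (d : measure_display) (T : measurableType d) (R : realType)
        (P : probability T R).

Lemma prob_le (A B : set T) : measurable A -> measurable B -> A `<=` B ->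
  prob P A <= prob P B.
Proof.
move=> mA mB AB; rewrite /prob; apply: fine_le.
- exact: fin_num_measure.
- exact: fin_num_measure.
by apply: le_measure => //; rewrite inE.
Qed.

Lemma prob_ge0 (A : set T) : 0 <= prob P A.
Proof. by rewrite /prob fine_ge0. Qed.

Lemma prob_sandwich (A B N : set T) : measurable A -> measurable B ->
  measurable N -> P N = 0%E -> A `<=` B -> B `<=` A `|` N -> prob P B = prob P A.
Proof.
move=> mA mB mN N0 AB BAN; rewrite /prob; congr fine.
apply/eqP; rewrite eq_le; apply/andP; split; last first.
  by apply: le_measure => //; rewrite inE.
rewrite -(measureU0 mA mN N0); apply: le_measure => //; rewrite inE //.
exact: measurableU.
Qed.
End H.

Lemma div_pos_neq0 (R : realFieldType) (a b : R) : 0 < a / b -> a != 0 /\ b != 0.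
Proof.
move=> h; split; apply/eqP => e; move: h; rewrite e ?mul0r ?invr0 ?mulr0 ltxx //.
Qed.

Arguments div_pos_neq0 {R a b}.

Lemma alg_id (R : realFieldType) (a L1 L0 A1 A0 Q1 Q0 S : R) :
  a != 0 -> L0 != 0 -> A1 != 0 -> A0 != 0 -> Q1 != 0 -> Q0 != 0 -> S != 0 ->
  L1 / a / (L0 / a) =
  A1 * L1 / a / Q1 / (A0 * L0 / a / Q0) * (Q1 / S / (Q0 / S) / (A1 / a / (A0 / a))).
Proof. by move=> *; field; do ! (apply/andP; split) => //. Qed.

(* Mpo d = M(d), Ypo d m = Y(d,m); observed M = M(D), Y = Y(D,M). *)
Theorem mainTheorem6 (d : measure_display) (T : measurableType d) (R : realType)
  (P : probability T R) (XT : Type) (X : T -> XT) (x : XT)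
  (D : T -> bool) (Mpo : bool -> T -> bool) (Ypo : bool -> bool -> T -> bool)
  (mD : measurable [set w | D w])
  (mM : forall b, measurable [set w | Mpo b w])
  (mY : forall b c, measurable [set w | Ypo b c w])
  (mX : measurable [set w | X w = x])
  (hY0 : forall b, P [set w | Ypo b false w] = 0%E)
  (hCI : forall b, cond_indep_pair P D (Mpo b) (Ypo b true) [set w | X w = x])
  (hposD : forall b, 0 < condP P [set w | D w = b] [set w | X w = x])
  (hposM : forall b, 0 < condP P [set w | Mpo (D w) w]
                            ([set w | D w = b] `&` [set w | X w = x]))
  (hposY : 0 < condE P (fun w => Ypo (D w) (Mpo (D w) w) w)
                 ([set w | D w = false] `&` [set w | Mpo (D w) w]
                   `&` [set w | X w = x])) :
  let Xx := [set w | X w = x] in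
  let Mobs := fun w => Mpo (D w) w in
  let Yobs := fun w => Ypo (D w) (Mobs w) w in
  let Yd := fun b w => Ypo b (Mpo b w) w in
  condE P (Yd true) Xx / condE P (Yd false) Xx
  = (condE P Yobs ([set w | D w = true] `&` [set w | Mobs w] `&` Xx)
     / condE P Yobs ([set w | D w = false] `&` [set w | Mobs w] `&` Xx))
    * ((condP P [set w | D w = true] ([set w | Mobs w] `&` Xx)
        / condP P [set w | D w = false] ([set w | Mobs w] `&` Xx))
       / (condP P [set w | D w = true] Xx / condP P [set w | D w = false] Xx)).
Proof.
move=> Xx Mobs Yobs Yd.
have mDb : forall b, measurable [set w | D w = b].
  case; first exact: mD.
  have -> : [set w | D w = false] = ~` [set w | D w].
    by apply/funext => w; apply/propext; rewrite /setC /=; case: (D w); split.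
  exact: measurableC.
have mMobs : measurable [set w | Mobs w].
  have -> : [set w | Mobs w] = ([set w | D w = true] `&` [set w | Mpo true w])
      `|` ([set w | D w = false] `&` [set w | Mpo false w]).
    apply/funext => w; apply/propext; rewrite /Mobs /=.
    case: (D w); split => //; [by move=> h; left|by case=> -[]|
      by move=> h; right|by case=> -[]].
  by apply: measurableU; apply: measurableI.
have E1 : forall b, prob P (Yd b `&` Xx)
    = prob P ([set w | Mpo b w] `&` [set w | Ypo b true w] `&` Xx).
  move=> b; apply: (@prob_sandwich _ _ _ P _ _ [set w | Ypo b false w]) => //.
  - by apply: measurableI => //; apply: measurableI.
  - have -> : Yd b `&` Xx = (([set w | Mpo b w] `&` [set w | Ypo b true w])
       `|` (~` [set w | Mpo b w] `&` [set w | Ypo b false w])) `&` Xx.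
      apply/funext => w; apply/propext; rewrite /Yd /=.
      case: (Mpo b w); split => -[h1 h2]; split => //;
        [by left|by case: h1 => -[]|by right|by case: h1 => -[]].
    apply: measurableI => //; apply: measurableU; apply: measurableI => //.
    exact: measurableC.
  - by move=> w [[h1 h2] h3]; split => //; rewrite /Yd h1.
  - move=> w [h1 h3]; move: h1; rewrite /Yd; case E: (Mpo b w) => h1.
      by left.
    by right.
have E2 : forall b, prob P ([set w | Yobs w] `&`
      ([set w | D w = b] `&` [set w | Mobs w] `&` Xx))
    = prob P ([set w | D w = b] `&` [set w | Mpo b w = true]
         `&` [set w | Ypo b true w = true] `&` Xx).
  move=> b; rewrite /prob; congr (fine (P _)); apply/funext => w; apply/propext.
  rewrite /Yobs /Mobs /=; split.
    by move=> [h1 [[h2 h3] h4]]; subst b; rewrite h3 in h1.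
  by move=> [[[h2 h3] h1] h4]; subst b; rewrite h3.
have E3 : forall b, prob P ([set w | Mobs w] `&` ([set w | D w = b] `&` Xx))
    = prob P ([set w | D w = b] `&` [set w | Mobs w] `&` Xx).
  by move=> b; rewrite setIA (setIC [set w | Mobs w]).
have CI : forall b, prob P ([set w | D w = b] `&` [set w | Mpo b w = true]
         `&` [set w | Ypo b true w = true] `&` Xx) * prob P Xx
      = prob P ([set w | D w = b] `&` Xx)
        * prob P ([set w | Mpo b w] `&` [set w | Ypo b true w] `&` Xx).
  by move=> b; exact: (hCI b b true true).
have S1 : prob P ([set w | D w = true] `&` [set w | Mobs w] `&` Xx)
    <= prob P ([set w | Mobs w] `&` Xx).
  apply: prob_le.
  - by apply: measurableI => //; apply: measurableI.
  - exact: measurableI.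
  - by move=> w [[_ h] h'].
have hY : 0 < condE P Yobs ([set w | D w = false] `&` [set w | Mobs w] `&` Xx) := hposY.
move: hY; rewrite /condE /condP E2 => /div_pos_neq0 [N0 Q0].
have [A1 a1] := div_pos_neq0 (hposD true).
have [A0 _] := div_pos_neq0 (hposD false).
have hM : 0 < condP P [set w | Mobs w] ([set w | D w = true] `&` Xx) := hposM true.
move: hM; rewrite /condP E3 => /div_pos_neq0 [Q1 _].
have hS : prob P ([set w | Mobs w] `&` Xx) != 0.
  rewrite gt_eqF //; apply: lt_le_trans S1.
  by rewrite lt_neqAle eq_sym Q1 prob_ge0.
rewrite /condE /condP !E2 -/Yd !E1.
set a := prob P Xx in a1 CI *.
set L1 := prob P ([set w | Mpo true w] `&` _ `&` Xx) in CI *.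
set L0 := prob P ([set w | Mpo false w] `&` _ `&` Xx) in CI *.
set N1 := prob P ([set w | D w = true] `&` _ `&` _ `&` Xx) in CI *.
set N0' := prob P ([set w | D w = false] `&` _ `&` _ `&` Xx) in N0 CI *.
have h1 := CI true. have h0 := CI false.
rewrite -/N1 in h1. rewrite -/N0' in h0.
set A1' := prob P ([set w | D w = true] `&` Xx) in A1 h1 *.
set A0' := prob P ([set w | D w = false] `&` Xx) in A0 h0 *.
have eN1 : N1 = A1' * L1 / a by rewrite -h1 mulrK // unitfE.
have eN0 : N0' = A0' * L0 / a by rewrite -h0 mulrK // unitfE.
have L0n : L0 != 0.
  by apply/eqP => e; move: N0; rewrite eN0 e mulr0 mul0r eqxx.
rewrite eN1 eN0.
rewrite !setIA; exact: alg_id.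
Qed.
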